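(* For any potentials $W$ and $\Theta$ and any $0<\kappa'<\kappa$, $$\|\mathrm{ad}_W\Theta\|_{\kappa'}\leq\frac{18}{\kappa'(\kappa-\kappa')}\|\Theta\|_\kappa\|W\|_\kappa.$$
   Context: $\Lambda$ is a finite set of sites, each carrying a finite-dimensional Hilbert space; $\|\cdot\|$ is the operator norm. A potential $Q$ is a family of operators $Q_Z$, $Z\subseteq\Lambda$, with $Q_Z$ supported on $Z$. Norm: $\|Q\|_\kappa=\sup_{x\in\Lambda}\sum_{Z\ni x}e^{\kappa|Z|}\|Q_Z\|$. Commutator of potentials: $(\mathrm{ad}_W\Theta)_Z=\sum_{Z_1\cap Z_2\neq\emptyset,Z_1\cup Z_2=Z}[W_{Z_1},\Theta_{Z_2}]$. *)

(* Defs.v *)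
From HB Require Import structures.
From mathcomp Require Import all_boot all_order all_algebra.
From mathcomp Require Import classical_sets reals.
From mathcomp Require Import sequences.
From mathcomp Require Import complex.
Set Implicit Arguments. Unset Strict Implicit. Unset Printing Implicit Defensive.
Import Order.TTheory GRing.Theory Num.Theory.
Local Open Scope ring_scope.

Section QuantumLattice.
Variables (R : realType) (Lam : finType) (d : Lam -> nat).

(* Basis configurations of the tensor product  H = ⊗_{x in Lam} C^(d x). *)
Definition conf := {dffun forall x : Lam, 'I_(d x)}.

Definition op := conf -> conf -> R[i].
Definition vec := conf -> R[i].

Definition opapp (A : op) (v : vec) : vec := fun s => \sum_(t : conf) A s t * v t.
Definition opmul (A B : op) : op := fun s t => \sum_(u : conf) A s u * B u t.
Definition comm (A B : op) : op := fun s t => opmul A B s t - opmul B A s t.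

Definition cabs2 (z : R[i]) : R := let: Complex a b := z in a ^+ 2 + b ^+ 2.
Definition vnorm (v : vec) : R := Num.sqrt (\sum_(s : conf) cabs2 (v s)).
Definition opnorm (A : op) : R :=
  sup [set r : R | exists v : vec, vnorm v <= 1 /\ r = vnorm (opapp A v)].

(* A is supported on Z, i.e. A = a_Z ⊗ 1_{Lam \ Z}: its matrix elements vanish
   unless the configurations agree outside Z, and otherwise depend only on the
   restrictions of the configurations to Z. *)
Definition supported_on (Z : {set Lam}) (A : op) : Prop :=
  (forall s t : conf, (exists x, x \notin Z /\ s x <> t x) -> A s t = 0) /\
  (forall s t s' t' : conf,
      (forall x, x \in Z -> s x = s' x /\ t x = t' x) ->
      (forall x, x \notin Z -> s x = t x /\ s' x = t' x) ->
      A s t = A s' t').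

Definition potential := {set Lam} -> op.
Definition is_potential (Q : potential) : Prop :=
  forall Z, supported_on Z (Q Z).

(* ||Q||_kappa = sup_x sum_{Z ∋ x} e^{kappa |Z|} ||Q_Z||  (Lam finite: a max) *)
Definition pot_norm (kappa : R) (Q : potential) : R :=
  \big[Num.max/0]_(x : Lam)
     \sum_(Z : {set Lam} | x \in Z) expR (kappa * #|Z|%:R) * opnorm (Q Z).

Definition ad (W Theta : potential) : potential := fun Z s t =>
  \sum_(Z1 : {set Lam}) \sum_(Z2 : {set Lam} | (Z1 :&: Z2 != finset.set0) && (Z1 :|: Z2 == Z))
     comm (W Z1) (Theta Z2) s t.

End QuantumLattice.

(* Main.v *)
Require Import Defs.
From HB Require Import structures.
From mathcomp Require Import all_boot all_order all_algebra.
From mathcomp Require Import classical_sets reals.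
From mathcomp Require Import sequences.
From mathcomp Require Import complex.
From mathcomp Require Import exp ring lra.
Import Order.TTheory GRing.Theory Num.Theory.
Local Open Scope ring_scope.

Lemma CS (R : realType) (I : finType) (x y : I -> R) :
  (\sum_i x i * y i) ^+ 2 <= (\sum_i x i ^+ 2) * (\sum_i y i ^+ 2).
Proof.
have H0 : 0 <= \sum_i \sum_j (x i * y j - x j * y i) ^+ 2.
  by apply: sumr_ge0 => i _; apply: sumr_ge0 => j _; apply: sqr_ge0.
have E : \sum_i \sum_j (x i * y j - x j * y i) ^+ 2 =
   \sum_i \sum_j (x i ^+ 2 * y j ^+ 2) + \sum_i \sum_j (x j ^+ 2 * y i ^+ 2)
   - 2 * \sum_i \sum_j ((x i * y i) * (x j * y j)).
  rewrite mulr_sumr -big_split -sumrB /=; apply: eq_bigr => i _.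
  rewrite mulr_sumr -big_split -sumrB /=; apply: eq_bigr => j _; ring.
have E1 : \sum_i \sum_j (x i ^+ 2 * y j ^+ 2) = (\sum_i x i ^+ 2) * (\sum_i y i ^+ 2).
  by rewrite mulr_suml; apply: eq_bigr => i _; rewrite mulr_sumr.
have E2 : \sum_i \sum_j (x j ^+ 2 * y i ^+ 2) = (\sum_i x i ^+ 2) * (\sum_i y i ^+ 2).
  by rewrite mulrC mulr_suml; apply: eq_bigr => i _; rewrite mulr_sumr; apply: eq_bigr => j _; rewrite mulrC.
have E3 : \sum_i \sum_j ((x i * y i) * (x j * y j)) = (\sum_i x i * y i) ^+ 2.
  by rewrite expr2 mulr_suml; apply: eq_bigr => i _; rewrite mulr_sumr.
move: H0; rewrite E E1 E2 E3; lra.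
Qed.

Section Ops.
Variables (R : realType) (Lam : finType) (d : Lam -> nat).

Definition re (z : complex R) : R := let: Complex a _ := z in a.
Definition im (z : complex R) : R := let: Complex _ b := z in b.

Lemma cabs2E (z : complex R) : cabs2 z = re z ^+ 2 + im z ^+ 2.
Proof. by case: z. Qed.

Lemma cabs2_ge0 (z : complex R) : 0 <= cabs2 z.
Proof. by rewrite cabs2E addr_ge0 // sqr_ge0. Qed.

Lemma cabs2M (z w : complex R) : cabs2 (z * w) = cabs2 z * cabs2 w.
Proof. case: z => a b; case: w => c e; rewrite /cabs2 /=. ring. Qed.

Lemma cabs2D (z w : complex R) : cabs2 (z + w) = cabs2 z + cabs2 w + 2 * (re z * re w + im z * im w).
Proof. case: z => a b; case: w => c e; rewrite /cabs2 /=. ring. Qed.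

Lemma cabs2N (z : complex R) : cabs2 (- z) = cabs2 z.
Proof. case: z => a b; rewrite /cabs2 /=. ring. Qed.

Lemma cabs2_real (r : R) : cabs2 (Complex r 0) = r ^+ 2.
Proof. rewrite /cabs2 /=. ring. Qed.

Local Notation vecT := (vec R d).
Local Notation opT := (op R d).
Local Notation confT := (conf d).
Definition cnorm (z : complex R) := Num.sqrt (cabs2 z).

Lemma cnorm_real {r : R} : 0 <= r -> cnorm (Complex r 0) = r.
Proof. by move=> r0; rewrite /cnorm cabs2_real sqrtr_sqr ger0_norm. Qed.

Lemma vnorm_ge0 (v : vecT) : 0 <= vnorm v.
Proof. exact: sqrtr_ge0. Qed.

Lemma vnorm_ext {u v : vecT} : (forall s, u s = v s) -> vnorm u = vnorm v.
Proof. by move=> h; rewrite /vnorm; congr Num.sqrt; apply: eq_bigr => s _; rewrite h. Qed.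

Lemma vnorm_scale (c : complex R) (v : vecT) :
  vnorm (fun s => c * v s) = cnorm c * vnorm v.
Proof.
rewrite /vnorm /cnorm -sqrtrM ?cabs2_ge0 // mulr_sumr; congr Num.sqrt.
by apply: eq_bigr => s _; rewrite cabs2M.
Qed.

Lemma vnorm0 : vnorm (fun _ : confT => 0 : complex R) = 0.
Proof.
rewrite /vnorm big1 ?sqrtr0 // => s _; rewrite /cabs2 /=; ring.
Qed.

Lemma vnorm_add (u v : vecT) : vnorm (fun s => u s + v s) <= vnorm u + vnorm v.
Proof.
set X := \sum_s cabs2 (u s); set Y := \sum_s cabs2 (v s).
set S := \sum_s (re (u s) * re (v s) + im (u s) * im (v s)).
have X0 : 0 <= X by apply: sumr_ge0 => s _; apply: cabs2_ge0.
have Y0 : 0 <= Y by apply: sumr_ge0 => s _; apply: cabs2_ge0.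
have E : \sum_s cabs2 (u s + v s) = X + Y + 2 * S.
  rewrite mulr_sumr -!big_split /=; apply: eq_bigr => s _; exact: cabs2D.
have P : forall F : confT -> bool -> R,
    \sum_(p : confT * bool) F p.1 p.2 = \sum_s (F s true + F s false).
  by move=> F; rewrite -pair_bigA; apply: eq_bigr => s _; rewrite big_bool.
have CS2 : S ^+ 2 <= X * Y.
  have := CS _ _ (fun p : confT * bool => if p.2 then re (u p.1) else im (u p.1))
             (fun p : confT * bool => if p.2 then re (v p.1) else im (v p.1)).
  rewrite (P (fun s b => (if b then re (u s) else im (u s)) * (if b then re (v s) else im (v s)))).
  rewrite (P (fun s b => (if b then re (u s) else im (u s)) ^+ 2)).
  rewrite (P (fun s b => (if b then re (v s) else im (v s)) ^+ 2)) /=.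
  have -> : \sum_s (re (u s) ^+ 2 + im (u s) ^+ 2) = X by apply: eq_bigr => s _; rewrite cabs2E.
  by have -> : \sum_s (re (v s) ^+ 2 + im (v s) ^+ 2) = Y by apply: eq_bigr => s _; rewrite cabs2E.
have SS : S <= Num.sqrt X * Num.sqrt Y.
  apply: le_trans (ler_norm S) _.
  rewrite -sqrtr_sqr -sqrtrM // ler_sqrt //; exact: mulr_ge0.
rewrite /vnorm E -[_ + Num.sqrt Y]ger0_norm ?addr_ge0 ?sqrtr_ge0 //.
rewrite -sqrtr_sqr ler_sqrt ?sqr_ge0 //.
have h : (Num.sqrt X + Num.sqrt Y) ^+ 2 = X + Y + 2 * (Num.sqrt X * Num.sqrt Y).
  by rewrite sqrrD !sqr_sqrtr //; ring.
rewrite h; lra.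
Qed.

Lemma vnorm_sum (I : Type) (r : seq I) (P : pred I) (f : I -> vecT) :
  vnorm (fun s => \sum_(i <- r | P i) f i s) <= \sum_(i <- r | P i) vnorm (f i).
Proof.
elim: r => [|a r IH].
  by rewrite (vnorm_ext (v := fun _ : confT => 0 : complex R)) ?vnorm0 ?big_nil // => s; rewrite big_nil.
rewrite big_cons; case: (boolP (P a)) => Pa.
  rewrite (vnorm_ext (v := fun s => f a s + \sum_(i <- r | P i) f i s)); last first.
    by move=> s; rewrite big_cons Pa.
  apply: le_trans (vnorm_add _ _) _; exact: lerD.
rewrite (vnorm_ext (v := fun s => \sum_(i <- r | P i) f i s)) //.
by move=> s; rewrite big_cons (negbTE Pa).
Qed.

Lemma cnorm_le (v : vecT) t : cnorm (v t) <= vnorm v.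
Proof.
rewrite /cnorm /vnorm ler_sqrt; last by apply: sumr_ge0 => s _; apply: cabs2_ge0.
rewrite (bigD1 t) //= lerDl; apply: sumr_ge0 => s _; apply: cabs2_ge0.
Qed.

Definition colsum (A : opT) := \sum_t vnorm (fun s => A s t).

Lemma colsum_ge0 A : 0 <= colsum A.
Proof. by apply: sumr_ge0 => t _; apply: vnorm_ge0. Qed.

Lemma opapp_bound (A : opT) (v : vecT) : vnorm (opapp A v) <= vnorm v * colsum A.
Proof.
rewrite (vnorm_ext (v := fun s => \sum_t v t * A s t)); last first.
  by move=> s; rewrite /opapp; apply: eq_bigr => t _; rewrite mulrC.
apply: le_trans (vnorm_sum _ (index_enum _) (fun _ => true) (fun t s => v t * A s t)) _.
rewrite /colsum mulr_sumr; apply: ler_sum => t _.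
rewrite vnorm_scale; apply: ler_wpM2r; [exact: vnorm_ge0 | exact: cnorm_le].
Qed.

Definition Sset (A : opT) := [set r : R | exists v : vecT, vnorm v <= 1 /\ r = vnorm (opapp A v)]%classic.

Lemma Sset0 (A : opT) : Sset A 0.
Proof.
exists (fun _ => 0 : complex R); split; first by rewrite vnorm0.
rewrite (vnorm_ext (v := fun _ : confT => 0 : complex R)) ?vnorm0 //.
by move=> s; rewrite /opapp big1 // => t _; rewrite mulr0.
Qed.

Lemma Sset_ub (A : opT) : ubound (Sset A) (colsum A).
Proof.
move=> r [v [v1 ->]]; apply: le_trans (opapp_bound A v) _.
have := colsum_ge0 A; have := vnorm_ge0 v; nra.
Qed.

Lemma Sset_has_ub (A : opT) : has_ubound (Sset A).
Proof. by exists (colsum A); apply: Sset_ub. Qed.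

Lemma opnorm_ge0 (A : opT) : 0 <= opnorm A.
Proof. exact: (ub_le_sup (Sset_has_ub A) (Sset0 A)). Qed.

Lemma opnorm_le (A : opT) M :
  (forall v : vecT, vnorm v <= 1 -> vnorm (opapp A v) <= M) -> opnorm A <= M.
Proof.
move=> h; apply: ge_sup; first by exists 0; apply: Sset0.
by move=> r [v [v1 ->]]; apply: h.
Qed.

Lemma opnorm_app (A : opT) (v : vecT) : vnorm (opapp A v) <= opnorm A * vnorm v.
Proof.
have n0 := vnorm_ge0 v.
case: (eqVneq (vnorm v) 0) => [n00|nn0].
  apply: le_trans (opapp_bound A v) _; rewrite n00 mul0r mulr0 //.
have np : 0 < vnorm v by rewrite lt_def nn0.
set c := Complex (vnorm v)^-1 0.
set w := fun s => c * v s.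
have w1 : vnorm w = 1.
  by rewrite /w vnorm_scale /c cnorm_real ?invr_ge0 // mulVf.
have Aw : vnorm (opapp A w) = (vnorm v)^-1 * vnorm (opapp A v).
  rewrite -(cnorm_real (r := (vnorm v)^-1)) ?invr_ge0 // -vnorm_scale.
  apply: vnorm_ext => s; rewrite /opapp /w mulr_sumr; apply: eq_bigr => t _.
  by rewrite mulrCA.
have : (vnorm v)^-1 * vnorm (opapp A v) <= opnorm A.
  rewrite -Aw; apply: (ub_le_sup (Sset_has_ub A)); exists w; split => //.
  by rewrite w1.
rewrite -(ler_pM2r np) mulrAC mulVf // mul1r; exact.
Qed.

Lemma opnorm_sum (I : Type) (r : seq I) (P : pred I) (F : I -> opT) :
  opnorm (fun s t => \sum_(i <- r | P i) F i s t) <= \sum_(i <- r | P i) opnorm (F i).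
Proof.
apply: opnorm_le => v v1.
rewrite (vnorm_ext (v := fun s => \sum_(i <- r | P i) opapp (F i) v s)); last first.
  move=> s; rewrite /opapp; under eq_bigr do rewrite mulr_suml.
  by rewrite exchange_big.
apply: le_trans (vnorm_sum _ _ _ _) _; apply: ler_sum => i _.
apply: le_trans (opnorm_app _ _) _.
have := opnorm_ge0 (F i); have := vnorm_ge0 v; nra.
Qed.

Lemma opnorm_sub (X Y : opT) :
  opnorm (fun s t => X s t - Y s t) <= opnorm X + opnorm Y.
Proof.
apply: opnorm_le => v v1.
rewrite (vnorm_ext (v := fun s => opapp X v s + (-1) * opapp Y v s)); last first.
  by move=> s; rewrite /opapp mulN1r -sumrB; apply: eq_bigr => t _; rewrite mulrBl.
apply: le_trans (vnorm_add _ _) _; rewrite vnorm_scale.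
have -> : cnorm (-1) = 1.
  by rewrite /cnorm cabs2N /cabs2 /= expr0n /= addr0 expr1n sqrtr1.
rewrite mul1r; apply: lerD; apply: le_trans (opnorm_app _ _) _.
  have := opnorm_ge0 X; have := vnorm_ge0 v; nra.
have := opnorm_ge0 Y; have := vnorm_ge0 v; nra.
Qed.

Lemma opnorm_mul (A B : opT) : opnorm (opmul A B) <= opnorm A * opnorm B.
Proof.
apply: opnorm_le => v v1.
rewrite (vnorm_ext (v := opapp A (opapp B v))); last first.
  move=> s; rewrite /opapp /opmul; under eq_bigr do rewrite mulr_suml.
  rewrite exchange_big; apply: eq_bigr => u _; rewrite mulr_sumr.
  by apply: eq_bigr => t _; rewrite mulrA.
apply: le_trans (opnorm_app _ _) _.
have h := opnorm_app B v.
apply: ler_wpM2l; first exact: opnorm_ge0.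
apply: le_trans h _; have := opnorm_ge0 B; have := vnorm_ge0 v; nra.
Qed.

Lemma opnorm_comm (A B : opT) : opnorm (comm A B) <= 2 * (opnorm A * opnorm B).
Proof.
apply: le_trans (opnorm_sub _ _) _.
have := opnorm_mul A B; have := opnorm_mul B A; lra.
Qed.

End Ops.

Section Comb.
Variables (R : realType) (Lam : finType).

Definition Nb (b : R) (f : {set Lam} -> R) :=
  \big[Num.max/0]_(x : Lam) \sum_(Z : {set Lam} | x \in Z) expR (b * #|Z|%:R) * f Z.

Lemma Nb_ge (b : R) f y :
  \sum_(Z : {set Lam} | y \in Z) expR (b * #|Z|%:R) * f Z <= Nb b f.
Proof. exact: (le_bigmax 0 (fun y => \sum_(Z : {set Lam} | y \in Z) expR (b * #|Z|%:R) * f Z) y). Qed.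

Lemma Nb_ge0 (b : R) f : (forall Z, 0 <= f Z) -> 0 <= Nb b f.
Proof.
move=> f0; rewrite /Nb; elim/big_ind: _ => //.
  by move=> u v u0 v0; rewrite le_max u0.
by move=> y _; apply: sumr_ge0 => Z _; rewrite mulr_ge0 ?expR_ge0.
Qed.

Lemma inter_bound (a b : R) (g : {set Lam} -> R) (Z1 : {set Lam}) :
  a <= b -> (forall Z, 0 <= g Z) ->
  \sum_(Z2 : {set Lam} | Z1 :&: Z2 != finset.set0) expR (a * #|Z2|%:R) * g Z2
    <= #|Z1|%:R * Nb b g.
Proof.
move=> ab g0.
set h := fun Z2 : {set Lam} => expR (a * #|Z2|%:R) * g Z2.
have h0 : forall Z, 0 <= h Z by move=> Z; rewrite /h mulr_ge0 ?expR_ge0.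
apply: (@le_trans _ _ (\sum_(Z2 : {set Lam}) \sum_(y in Z1) (if y \in Z2 then h Z2 else 0))).
  rewrite big_mkcond /=; apply: ler_sum => Z2 _.
  case: ifP => P; last by apply: sumr_ge0 => y _; case: ifP.
  case/set0Pn: P => y; rewrite inE => /andP [yZ1 yZ2].
  rewrite (bigD1 y) //= yZ2 lerDl; apply: sumr_ge0 => z _; case: ifP => // _; exact: h0.
rewrite [X in X <= _]exchange_big /= mulr_natl -sumr_const; apply: ler_sum => y yZ1.
rewrite -big_mkcond /=; apply: le_trans (Nb_ge b g y); apply: ler_sum => Z2 _.
rewrite /h; apply: ler_wpM2r => //; rewrite ler_expR; apply: ler_wpM2r => //.
Qed.

Lemma nexp_bound (a b n : R) : a < b -> 0 <= n ->
  n * expR (a * n) <= (b - a)^-1 * expR (b * n).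
Proof.
move=> ab n0.
have ba : 0 < b - a by rewrite subr_gt0.
have h := expR_ge1Dx ((b - a) * n).
have E : expR (b * n) = expR ((b - a) * n) * expR (a * n).
  by rewrite -expRD; congr expR; ring.
rewrite E mulrA; apply: ler_wpM2r; first exact: expR_ge0.
have bne : b - a != 0 by apply/negbT; exact: gt_eqF ba.
have -> : (b - a)^-1 * expR ((b - a) * n) = n + (b - a)^-1 * (expR ((b - a) * n) - (b - a) * n).
  by field.
rewrite lerDl; apply: mulr_ge0; first by rewrite invr_ge0 ltW.
lra.
Qed.

Lemma key (a b : R) (f g : {set Lam} -> R) x : 0 < a -> a < b ->
  (forall Z, 0 <= f Z) -> (forall Z, 0 <= g Z) ->
  \sum_(Z1 : {set Lam} | x \in Z1) \sum_(Z2 : {set Lam} | Z1 :&: Z2 != finset.set0)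
      expR (a * (#|Z1| + #|Z2|)%:R) * (f Z1 * g Z2)
   <= (b - a)^-1 * Nb b f * Nb b g.
Proof.
move=> a0 ab f0 g0.
apply: (@le_trans _ _ (\sum_(Z1 : {set Lam} | x \in Z1) expR (a * #|Z1|%:R) * f Z1 * (#|Z1|%:R * Nb b g))).
  apply: ler_sum => Z1 _.
  have -> : \sum_(Z2 : {set Lam} | Z1 :&: Z2 != finset.set0) expR (a * (#|Z1| + #|Z2|)%:R) * (f Z1 * g Z2)
      = expR (a * #|Z1|%:R) * f Z1 * \sum_(Z2 : {set Lam} | Z1 :&: Z2 != finset.set0) expR (a * #|Z2|%:R) * g Z2.
    rewrite mulr_sumr; apply: eq_bigr => Z2 _; rewrite natrD mulrDr expRD; ring.
  apply: ler_wpM2l; first by rewrite mulr_ge0 ?expR_ge0.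
  exact: inter_bound (ltW ab) g0.
apply: (@le_trans _ _ (\sum_(Z1 : {set Lam} | x \in Z1) ((b - a)^-1 * Nb b g) * (expR (b * #|Z1|%:R) * f Z1))).
  apply: ler_sum => Z1 _.
  have := nexp_bound a b #|Z1|%:R ab (ler0n _ _).
  have Ng0 := Nb_ge0 b g g0; have := f0 Z1.
  set n := (#|Z1|%:R : R); set e1 := expR (a * n); set e2 := expR (b * n).
  move=> fz h.
  have -> : e1 * f Z1 * (n * Nb b g) = (n * e1) * (f Z1 * Nb b g) by ring.
  have -> : (b - a)^-1 * Nb b g * (e2 * f Z1) = ((b - a)^-1 * e2) * (f Z1 * Nb b g) by ring.
  by apply: ler_wpM2r => //; apply: mulr_ge0.
rewrite -mulr_sumr [in X in _ <= X]mulrAC; apply: ler_wpM2l.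
  by apply: mulr_ge0; [rewrite invr_ge0 subr_ge0 ltW | exact: Nb_ge0].
exact: Nb_ge.
Qed.

End Comb.
Arguments Nb {R Lam}. Arguments Nb_ge0 {R Lam}. Arguments Nb_ge {R Lam}. Arguments key {R Lam}.
Arguments opnorm_sum {R Lam d} I r P F. Arguments opnorm_comm {R Lam d}.
Arguments opnorm_ge0 {R Lam d}.
Lemma eqle (R : realType) (x y : R) : x = y -> x <= y.
Proof. by move->. Qed.

Theorem lemma6 (R : realType) (Lam : finType) (d : Lam -> nat)
  (W Theta : potential R d) (kappa kappa' : R) :
  is_potential W -> is_potential Theta ->
  0 < kappa' -> kappa' < kappa ->
  pot_norm kappa' (ad W Theta)
    <= 18 / (kappa' * (kappa - kappa')) * pot_norm kappa Theta * pot_norm kappa W.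
Proof.
move=> _ _ a0 ab.
set a := kappa' in a0 ab *; set b := kappa in ab *.
pose w := fun Z => opnorm (W Z); pose t := fun Z => opnorm (Theta Z).
have w0 : forall Z, 0 <= w Z by move=> Z; exact: opnorm_ge0.
have t0 : forall Z, 0 <= t Z by move=> Z; exact: opnorm_ge0.
change (pot_norm b W) with (Nb b w); change (pot_norm b Theta) with (Nb b t).
have NW0 := Nb_ge0 b w w0; have NT0 := Nb_ge0 b t t0.
have ba : 0 < b - a by rewrite subr_gt0.
pose P := fun Z1 Z2 : {set Lam} => Z1 :&: Z2 != finset.set0.
pose G := fun Z1 Z2 : {set Lam} => 2 * expR (a * #|Z1 :|: Z2|%:R) * (w Z1 * t Z2).
pose H := fun Z1 Z2 : {set Lam} => 2 * expR (- a) * (expR (a * (#|Z1| + #|Z2|)%:R) * (w Z1 * t Z2)).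
have G0 : forall Z1 Z2, 0 <= G Z1 Z2.
  by move=> Z1 Z2; rewrite /G !mulr_ge0 ?expR_ge0.
have H0 : forall Z1 Z2, 0 <= H Z1 Z2.
  by move=> Z1 Z2; rewrite /H !mulr_ge0 ?expR_ge0.
have GH : forall Z1 Z2, P Z1 Z2 -> G Z1 Z2 <= H Z1 Z2.
  move=> Z1 Z2 PZ; rewrite /G /H -mulrA -[in X in _ <= X]mulrA; apply: ler_wpM2l => //.
  rewrite [in X in _ <= X]mulrA -expRD; apply: ler_wpM2r; first by rewrite mulr_ge0.
  rewrite ler_expR.
  have hc : (#|Z1 :|: Z2| + 1 <= #|Z1| + #|Z2|)%N.
    by rewrite -cardsUI leq_add2l card_gt0.
  have : (#|Z1 :|: Z2|%:R + 1 <= (#|Z1| + #|Z2|)%:R :> R).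
    by rewrite natr1 ler_nat -addn1.
  move=> /(ler_wpM2l (ltW a0)); rewrite mulrDr mulr1; lra.
set C := 18 / (a * (b - a)).
have C0 : 0 <= C by rewrite /C divr_ge0 // mulr_ge0 // ltW.
rewrite /pot_norm; apply: bigmax_le; first by do 2 apply: mulr_ge0 => //.
move=> x _.
apply: (@le_trans _ _ (\sum_(Z : {set Lam} | x \in Z) \sum_(Z1 : {set Lam})
     \sum_(Z2 : {set Lam} | P Z1 Z2 && (Z1 :|: Z2 == Z)) G Z1 Z2)).
  apply: ler_sum => Z _.
  have S1 : opnorm (ad W Theta Z) <= \sum_(Z1 : {set Lam})
     \sum_(Z2 : {set Lam} | P Z1 Z2 && (Z1 :|: Z2 == Z)) 2 * (w Z1 * t Z2).
    rewrite /ad.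
    apply: le_trans (opnorm_sum _ _ _ (fun Z1 s t => \sum_(Z2 : {set Lam} | (Z1 :&: Z2 != finset.set0) && (Z1 :|: Z2 == Z))
     comm (W Z1) (Theta Z2) s t)) _.
    apply: ler_sum => Z1 _.
    apply: le_trans (opnorm_sum _ _ _ (fun Z2 => comm (W Z1) (Theta Z2))) _.
    apply: ler_sum => Z2 _; exact: opnorm_comm.
  apply: le_trans (ler_wpM2l (expR_ge0 _) S1) _.
  rewrite mulr_sumr; apply: ler_sum => Z1 _; rewrite mulr_sumr; apply: ler_sum => Z2 /andP [_ /eqP <-].
  by apply: eqle; rewrite /G; ring.
have E3 : \sum_(Z : {set Lam} | x \in Z) \sum_(Z1 : {set Lam})
     \sum_(Z2 : {set Lam} | P Z1 Z2 && (Z1 :|: Z2 == Z)) G Z1 Z2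
   = \sum_(Z1 : {set Lam}) \sum_(Z2 : {set Lam})
       (if P Z1 Z2 && (x \in Z1 :|: Z2) then G Z1 Z2 else 0).
  rewrite exchange_big; apply: eq_bigr => Z1 _.
  transitivity (\sum_(Z : {set Lam}) \sum_(Z2 : {set Lam})
      (if (x \in Z) && (P Z1 Z2 && (Z1 :|: Z2 == Z)) then G Z1 Z2 else 0)).
    rewrite big_mkcond; apply: eq_bigr => Z _; case: (x \in Z) => /=.
      by rewrite big_mkcond.
    by rewrite big1.
  rewrite exchange_big; apply: eq_bigr => Z2 _.
  rewrite (bigD1 (Z1 :|: Z2)) //= big1 ?addr0; first by rewrite eqxx andbT andbC.
  by move=> Z /negbTE HZ; rewrite eq_sym HZ !andbF.
rewrite E3.
apply: (@le_trans _ _ (\sum_(Z1 : {set Lam}) \sum_(Z2 : {set Lam})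
       (if x \in Z1 then (if P Z1 Z2 then H Z1 Z2 else 0) else 0)
   + \sum_(Z1 : {set Lam}) \sum_(Z2 : {set Lam})
       (if x \in Z2 then (if P Z1 Z2 then H Z1 Z2 else 0) else 0))).
  rewrite -big_split; apply: ler_sum => Z1 _; rewrite -big_split; apply: ler_sum => Z2 _ /=.
  case PZ: (P Z1 Z2) => /=.
    have := GH Z1 Z2 PZ; have := H0 Z1 Z2; have := G0 Z1 Z2.
    by rewrite finset.in_setU; case: (x \in Z1); case: (x \in Z2) => /=; lra.
  by case: (x \in Z1); case: (x \in Z2); rewrite /= ?addr0.
have E5 : \sum_(Z1 : {set Lam}) \sum_(Z2 : {set Lam})
       (if x \in Z1 then (if P Z1 Z2 then H Z1 Z2 else 0) else 0)
    = 2 * expR (- a) * \sum_(Z1 : {set Lam} | x \in Z1) \sum_(Z2 : {set Lam} | Z1 :&: Z2 != finset.set0)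
      expR (a * (#|Z1| + #|Z2|)%:R) * (w Z1 * t Z2).
  rewrite [X in _ = _ * X]big_mkcond mulr_sumr; apply: eq_bigr => Z1 _.
  case: (x \in Z1); last by rewrite mulr0 big1.
  by rewrite [X in _ = _ * X]big_mkcond mulr_sumr; apply: eq_bigr => Z2 _; rewrite /H /P; case: ifP; rewrite ?mulr0.
have E6 : \sum_(Z1 : {set Lam}) \sum_(Z2 : {set Lam})
       (if x \in Z2 then (if P Z1 Z2 then H Z1 Z2 else 0) else 0)
    = 2 * expR (- a) * \sum_(Z2 : {set Lam} | x \in Z2) \sum_(Z1 : {set Lam} | Z2 :&: Z1 != finset.set0)
      expR (a * (#|Z2| + #|Z1|)%:R) * (t Z2 * w Z1).
  rewrite exchange_big [X in _ = _ * X]big_mkcond mulr_sumr; apply: eq_bigr => Z2 _.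
  case: (x \in Z2); last by rewrite mulr0 big1.
  rewrite [X in _ = _ * X]big_mkcond mulr_sumr; apply: eq_bigr => Z1 _; rewrite /H /P finset.setIC addnC.
  by case: ifP; rewrite ?mulr0 // (mulrC (t Z2)).
rewrite E5 E6.
have K1 := key a b w t x a0 ab w0 t0.
have K2 := key a b t w x a0 ab t0 w0.
have e0 : 0 <= expR (- a) := expR_ge0 _.
have ea : a * expR (- a) <= 1.
  have h1 := expR_ge1Dx a.
  have h2 : expR a * expR (- a) = 1 by rewrite -expRD addrN expR0.
  nra.
have q0 : 0 < (b - a)^-1 by rewrite invr_gt0.
have Eq : expR (- a) <= a^-1.
  have an : a != 0 by apply/negbT; exact: gt_eqF a0.
  have -> : expR (- a) = a^-1 * (a * expR (- a)) by rewrite mulrA mulVf // mul1r.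
  by rewrite -[X in _ <= X]mulr1; apply: ler_wpM2l => //; rewrite invr_ge0 ltW.
have CE : C = 18 * (a^-1 * (b - a)^-1) by rewrite /C invfM.
rewrite CE.
set K := Nb b t * Nb b w.
have K0 : 0 <= K by rewrite mulr_ge0.
set q := (b - a)^-1.
set E := expR (- a).
set ai := a^-1.
have hK1 : 2 * E * \sum_(Z1 : {set Lam} | x \in Z1) \sum_(Z2 : {set Lam} | Z1 :&: Z2 != finset.set0)
      expR (a * (#|Z1| + #|Z2|)%:R) * (w Z1 * t Z2) <= 2 * E * (q * K).
  apply: ler_wpM2l; first by rewrite mulr_ge0.
  by apply: le_trans K1 _; rewrite /K -mulrA (mulrC (Nb b w)).
have hK2 : 2 * E * \sum_(Z2 : {set Lam} | x \in Z2) \sum_(Z1 : {set Lam} | Z2 :&: Z1 != finset.set0)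
      expR (a * (#|Z2| + #|Z1|)%:R) * (t Z2 * w Z1) <= 2 * E * (q * K).
  apply: ler_wpM2l; first by rewrite mulr_ge0.
  by apply: le_trans K2 _; rewrite /K -mulrA.
apply: le_trans (lerD hK1 hK2) _.
have : E * (q * K) <= ai * (q * K) by apply: ler_wpM2r => //; rewrite mulr_ge0 // ltW.
have -> : 18 * (ai * q) * Nb b t * Nb b w = 18 * (ai * (q * K)) by rewrite /K; ring.
have : 0 <= ai * (q * K) by rewrite mulr_ge0 // ?mulr_ge0 // ?invr_ge0 ltW.
lra.
Qed.
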